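(* For every (possibly open) term $t$ with $k\notin\mathrm{fv}(t)$, $t\;(\approx^p_\emptyset)^{\circ}\;\mathcal Sk.(k\,t)$.
   Context: Terms of $\lambda_S$: $t ::= x \mid \lambda x.t \mid t\,t \mid \mathcal{S}k.t \mid \langle t\rangle$ (shift binds $k$; $\langle\cdot\rangle$ reset), up to $\alpha$-conversion; $\mathrm{fv}(t)$ free variables. Values $v::=\lambda x.t$. Pure contexts $E ::= \Box \mid v\,E \mid E\,t$; evaluation contexts $F ::= \Box \mid v\,F \mid F\,t \mid \langle F\rangle$. Reduction: $F[(\lambda x.t)v]\to F[t\{v/x\}]$; $F[\langle E[\mathcal Sk.t]\rangle]\to F[\langle t\{\lambda x.\langle E[x]\rangle/k\}\rangle]$ ($x\notin\mathrm{fv}(E)$); $F[\langle v\rangle]\to F[v]$; $\to^*$ reflexive-transitive closure. Program: term $\langle t\rangle$ (ranged over by $p$). Closures: for $R$ a relation on closed terms, $\widetilde R$ is the smallest relation containing $R$, all $(x,x)$, closed under all term constructors, restricted to closed terms; $\widehat R$ is the smallest relation on closed evaluation contexts with $\Box\widehat R\Box$, $v_0F_0\widehat Rv_1F_1$ if $F_0\widehat RF_1,v_0\widetilde Rv_1$; $F_0t_0\widehat RF_1t_1$ if $F_0\widehat RF_1,t_0\widetilde Rt_1$; $\langle F_0\rangle\widehat R\langle F_1\rangle$ if $F_0\widehat RF_1$. Environmental bisimilarity for programs: an environment $\mathcal E$ is a relation on closed values; an environmental relation $\mathcal X$ is a set of environments and triples $(\mathcal E,t_0,t_1)$, $t_0,t_1$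 closed, written $t_0\mathcal X_{\mathcal E}t_1$. $\mathcal X$ is an environmental bisimulation for programs if (1) if $t_0\mathcal X_{\mathcal E}t_1$ and $t_0,t_1$ are not both programs, then for all pure $E_0\widehat{\mathcal E}E_1$, $\langle E_0[t_0]\rangle\mathcal X_{\mathcal E}\langle E_1[t_1]\rangle$; (2) if $p_0\mathcal X_{\mathcal E}p_1$: (a) $p_0\to p_0'$ (program) implies $p_1\to^*p_1'$ (program) with $p_0'\mathcal X_{\mathcal E}p_1'$; (b) $p_0\to v_0$ implies $p_1\to^*v_1$ and $\{(v_0,v_1)\}\cup\mathcal E\in\mathcal X$; (c) symmetric conditions; (3) for $\mathcal E\in\mathcal X$, $(\lambda x.t_0)\mathcal E(\lambda x.t_1)$ and $v_0\widetilde{\mathcal E}v_1$ imply $t_0\{v_0/x\}\mathcal X_{\mathcal E}t_1\{v_1/x\}$. $\approx^p$ is the largest such relation; $t_0\approx^p_{\emptyset}t_1$ means $(\emptyset,t_0,t_1)\in\approx^p$. Open extension: for terms $t_0,t_1$ with $\vec x=\mathrm{fv}(t_0)\cup\mathrm{fv}(t_1)$, $t_0\,(\approx^p_\emptyset)^\circ\,t_1$ iff $\lambda\vec x.t_0\approx^p_\emptyset\lambda\vec x.t_1$, where $\lambda\vec x.t$ abstracts the variables of $\vec x$ in succession. *)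

(* Defs.v *)
From mathcomp Require Import all_boot.
Set Implicit Arguments. Unset Strict Implicit. Unset Printing Implicit Defensive.

(* Terms of lambda_S, de Bruijn indices (alpha-conversion is built in).
   Lam t binds index 0 in t; Shift t binds k = index 0 in t. *)
Inductive term : Type :=
| Var of nat
| Lam of term
| App of term & term
| Shift of term
| Reset of term.

Fixpoint tlift (d c : nat) (t : term) : term :=
  match t with
  | Var i => if c <= i then Var (i + d) else Var i
  | Lam t => Lam (tlift d c.+1 t)
  | App a b => App (tlift d c a) (tlift d c b)
  | Shift t => Shift (tlift d c.+1 t)
  | Reset t => Reset (tlift d c t)
  end.

Fixpoint subst (n : nat) (u : term) (t : term) : term :=
  match t with
  | Var i => if i < n then Var i else if i == n then tlift n 0 u else Var i.-1
  | Lam t => Lam (subst n.+1 u t)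
  | App a b => App (subst n u a) (subst n u b)
  | Shift t => Shift (subst n.+1 u t)
  | Reset t => Reset (subst n u t)
  end.

(* t{v/x} where x is the binder of the enclosing abstraction *)
Definition subst0 (v t : term) : term := subst 0 v t.

Fixpoint fv (t : term) : seq nat :=
  match t with
  | Var i => [:: i]
  | Lam t => [seq i.-1 | i <- fv t & i != 0]
  | App a b => fv a ++ fv b
  | Shift t => [seq i.-1 | i <- fv t & i != 0]
  | Reset t => fv t
  end.

Definition closed (t : term) : Prop := fv t = [::].

Definition is_value (t : term) : bool := if t is Lam _ then true else false.
Definition is_prog (t : term) : bool := if t is Reset _ then true else false.

(* Evaluation contexts F ::= [] | v F | F t | <F>;  v = Lam b is stored as b *)
Inductive ctx : Type :=
| Hole
| CVal of term & ctx
| CAppL of ctx & term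
| CReset of ctx.

Fixpoint plug (F : ctx) (t : term) : term :=
  match F with
  | Hole => t
  | CVal b F => App (Lam b) (plug F t)
  | CAppL F u => App (plug F t) u
  | CReset F => Reset (plug F t)
  end.

Fixpoint pure (F : ctx) : bool :=
  match F with
  | Hole => true
  | CVal _ F => pure F
  | CAppL F _ => pure F
  | CReset _ => false
  end.

(* shift all free indices of a context by one (so index 0 is fresh for it) *)
Fixpoint lift_ctx (F : ctx) : ctx :=
  match F with
  | Hole => Hole
  | CVal b F => CVal (tlift 1 1 b) (lift_ctx F)
  | CAppL F u => CAppL (lift_ctx F) (tlift 1 0 u)
  | CReset F => CReset (lift_ctx F)
  end.

Inductive step : term -> term -> Prop :=
| step_beta F b v : is_value v ->
    step (plug F (App (Lam b) v)) (plug F (subst0 v b))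
| step_shift F E t : pure E ->
    step (plug F (Reset (plug E (Shift t))))
         (plug F (Reset (subst0 (Lam (Reset (plug (lift_ctx E) (Var 0)))) t)))
| step_reset F v : is_value v ->
    step (plug F (Reset v)) (plug F v).

Inductive steps : term -> term -> Prop :=
| steps_refl t : steps t t
| steps_step t u w : step t u -> steps u w -> steps t w.

Definition rel := term -> term -> Prop.

Inductive tilde_gen (R : rel) : rel :=
| tg_R t0 t1 : R t0 t1 -> tilde_gen R t0 t1
| tg_var x : tilde_gen R (Var x) (Var x)
| tg_lam t0 t1 : tilde_gen R t0 t1 -> tilde_gen R (Lam t0) (Lam t1)
| tg_app a0 a1 b0 b1 : tilde_gen R a0 a1 -> tilde_gen R b0 b1 ->
    tilde_gen R (App a0 b0) (App a1 b1)
| tg_shift t0 t1 : tilde_gen R t0 t1 -> tilde_gen R (Shift t0) (Shift t1)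
| tg_reset t0 t1 : tilde_gen R t0 t1 -> tilde_gen R (Reset t0) (Reset t1).

Definition tilde (R : rel) : rel :=
  fun t0 t1 => tilde_gen R t0 t1 /\ closed t0 /\ closed t1.

Inductive hat (R : rel) : ctx -> ctx -> Prop :=
| hat_hole : hat R Hole Hole
| hat_val b0 b1 F0 F1 : hat R F0 F1 -> tilde R (Lam b0) (Lam b1) ->
    hat R (CVal b0 F0) (CVal b1 F1)
| hat_app F0 F1 t0 t1 : hat R F0 F1 -> tilde R t0 t1 ->
    hat R (CAppL F0 t0) (CAppL F1 t1)
| hat_reset F0 F1 : hat R F0 F1 -> hat R (CReset F0) (CReset F1).

Definition env_ok (E : rel) : Prop :=
  forall v0 v1, E v0 v1 -> [/\ is_value v0, is_value v1, closed v0 & closed v1].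

Definition env_empty : rel := fun _ _ => False.

Definition env_add (v0 v1 : term) (E : rel) : rel :=
  fun a b => (a = v0 /\ b = v1) \/ E a b.

Record envrel : Type := EnvRel {
  xenv : rel -> Prop;
  xtri : rel -> term -> term -> Prop
}.

Record is_env_bisim (X : envrel) : Prop := {
  eb_env_ok : forall E, xenv X E -> env_ok E;
  eb_tri_ok : forall E t0 t1, xtri X E t0 t1 ->
      [/\ env_ok E, closed t0 & closed t1];
  eb_ctx : forall E t0 t1, xtri X E t0 t1 -> ~~ (is_prog t0 && is_prog t1) ->
      forall E0 E1, pure E0 -> pure E1 -> hat E E0 E1 ->
      xtri X E (Reset (plug E0 t0)) (Reset (plug E1 t1));
  eb_prog_l : forall E p0 p1, xtri X E p0 p1 -> is_prog p0 -> is_prog p1 ->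
      forall p0', step p0 p0' -> is_prog p0' ->
      exists2 p1', steps p1 p1' & is_prog p1' /\ xtri X E p0' p1';
  eb_val_l : forall E p0 p1, xtri X E p0 p1 -> is_prog p0 -> is_prog p1 ->
      forall v0, step p0 v0 -> is_value v0 ->
      exists2 v1, steps p1 v1 & is_value v1 /\ xenv X (env_add v0 v1 E);
  eb_prog_r : forall E p0 p1, xtri X E p0 p1 -> is_prog p0 -> is_prog p1 ->
      forall p1', step p1 p1' -> is_prog p1' ->
      exists2 p0', steps p0 p0' & is_prog p0' /\ xtri X E p0' p1';
  eb_val_r : forall E p0 p1, xtri X E p0 p1 -> is_prog p0 -> is_prog p1 ->
      forall v1, step p1 v1 -> is_value v1 ->
      exists2 v0, steps p0 v0 & is_value v0 /\ xenv X (env_add v0 v1 E);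
  eb_lam : forall E, xenv X E -> forall b0 b1, E (Lam b0) (Lam b1) ->
      forall v0 v1, is_value v0 -> is_value v1 -> tilde E v0 v1 ->
      xtri X E (subst0 v0 b0) (subst0 v1 b1)
}.

Definition approx_p (E : rel) (t0 t1 : term) : Prop :=
  exists X, is_env_bisim X /\ xtri X E t0 t1.

Fixpoint ren (r : nat -> nat) (c : nat) (t : term) : term :=
  match t with
  | Var i => if i < c then Var i else Var (r (i - c) + c)
  | Lam t => Lam (ren r c.+1 t)
  | App a b => App (ren r c a) (ren r c b)
  | Shift t => Shift (ren r c.+1 t)
  | Reset t => Reset (ren r c t)
  end.

(* lambda x1 ... lambda xm . t, with xs = [:: x1; ...; xm] *)
Definition close (xs : seq nat) (t : term) : term :=
  iter (size xs) Lam (ren (fun x => (size xs).-1 - index x xs) 0 t).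

Definition open_approx (t0 t1 : term) : Prop :=
  let xs := sort leq (undup (fv t0 ++ fv t1)) in
  approx_p env_empty (close xs t0) (close xs t1).

(* Main.v *)
Require Import Defs.
From mathcomp Require Import all_boot zify.
Set Implicit Arguments. Unset Strict Implicit. Unset Printing Implicit Defensive.

Ltac vsolve := repeat (case: ifP => /= ?); first [ reflexivity | (congr Var; lia) | exfalso; lia | idtac ].

Lemma tlift0 t c : tlift 0 c t = t.
Proof.
elim: t c => [i|t IH|a IHa b IHb|t IH|t IH] c /=; rewrite ?IH ?IHa ?IHb //.
by case: ifP => _; rewrite ?addn0.
Qed.

Lemma tlift_tlift t d c e c' : c' <= c ->
  tlift d (c + e) (tlift e c' t) = tlift e c' (tlift d c t).
Proof.
elim: t d c e c' => [i|t IH|a IHa b IHb|t IH|t IH] d c e c' Hc /=.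
- vsolve.
- by rewrite -addSn IH.
- by rewrite IHa // IHb.
- by rewrite -addSn IH.
- by rewrite IH.
Qed.

Lemma tlift_merge t d e c c' : c' <= c -> c <= c' + e ->
  tlift d c (tlift e c' t) = tlift (d + e) c' t.
Proof.
elim: t d e c c' => [i|t IH|a IHa b IHb|t IH|t IH] d e c c' H1 H2 /=.
- vsolve.
- by rewrite IH.
- by rewrite IHa // IHb.
- by rewrite IH.
- by rewrite IH.
Qed.

Lemma subst_tlift t n u c : c <= n ->
  subst n.+1 u (tlift 1 c t) = tlift 1 c (subst n u t).
Proof.
elim: t n u c => [i|t IH|a IHa b IHb|t IH|t IH] n u c Hc /=; rewrite ?IH ?IHa ?IHb //.
case: (ltngtP i n) => Hin; vsolve.
rewrite tlift_merge ?add1n //; lia.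
Qed.

Lemma subst_tlift_id t n u : subst n u (tlift 1 n t) = t.
Proof.
elim: t n => [i|t IH|a IHa b IHb|t IH|t IH] n /=; rewrite ?IH ?IHa ?IHb //.
vsolve.
Qed.

Fixpoint comp (E F : ctx) : ctx :=
  match E with
  | Hole => F
  | CVal b E => CVal b (comp E F)
  | CAppL E t => CAppL (comp E F) t
  | CReset E => CReset (comp E F)
  end.

Lemma plug_comp E F x : plug (comp E F) x = plug E (plug F x).
Proof. by elim: E => //= [b E ->|E -> t|E ->]. Qed.

Lemma comp_assoc E F G : comp (comp E F) G = comp E (comp F G).
Proof. by elim: E => //= [b E ->|E -> t|E ->]. Qed.

Lemma comp_hole E : comp E Hole = E.
Proof. by elim: E => //= [b E ->|E -> t|E ->]. Qed.

Lemma pure_comp E F : pure (comp E F) = pure E && pure F.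
Proof. by elim: E. Qed.

Fixpoint ctx_lift d c (E : ctx) : ctx :=
  match E with
  | Hole => Hole
  | CVal b E => CVal (tlift d c.+1 b) (ctx_lift d c E)
  | CAppL E t => CAppL (ctx_lift d c E) (tlift d c t)
  | CReset E => CReset (ctx_lift d c E)
  end.

Fixpoint ctx_subst n u (E : ctx) : ctx :=
  match E with
  | Hole => Hole
  | CVal b E => CVal (subst n.+1 u b) (ctx_subst n u E)
  | CAppL E t => CAppL (ctx_subst n u E) (subst n u t)
  | CReset E => CReset (ctx_subst n u E)
  end.

Lemma lift_ctxE E : lift_ctx E = ctx_lift 1 0 E.
Proof. by elim: E => //= [b E ->|E -> t|E ->]. Qed.

Lemma tlift_plug d c E x : tlift d c (plug E x) = plug (ctx_lift d c E) (tlift d c x).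
Proof. by elim: E => //= [b E ->|E -> t|E ->]. Qed.

Lemma subst_plug n u E x : subst n u (plug E x) = plug (ctx_subst n u E) (subst n u x).
Proof. by elim: E => //= [b E ->|E -> t|E ->]. Qed.

Lemma ctx_lift_comp d c E F : ctx_lift d c (comp E F) = comp (ctx_lift d c E) (ctx_lift d c F).
Proof. by elim: E => //= [b E ->|E -> t|E ->]. Qed.

Lemma ctx_subst_comp n u E F : ctx_subst n u (comp E F) = comp (ctx_subst n u E) (ctx_subst n u F).
Proof. by elim: E => //= [b E ->|E -> t|E ->]. Qed.

Lemma ctx_lift_lift E d c : ctx_lift d c.+1 (ctx_lift 1 0 E) = ctx_lift 1 0 (ctx_lift d c E).
Proof.
elim: E => //= [b E ->|E -> t|E ->] //.
- by have := @tlift_tlift b d c.+1 1 1 isT; rewrite addn1 => ->.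
- by have := @tlift_tlift t d c 1 0 isT; rewrite addn1 => ->.
Qed.

Lemma ctx_subst_lift E n u : ctx_subst n.+1 u (ctx_lift 1 0 E) = ctx_lift 1 0 (ctx_subst n u E).
Proof.
elim: E => //= [b E ->|E -> t|E ->] //.
- by rewrite subst_tlift.
- by rewrite subst_tlift.
Qed.

Lemma ctx_subst_lift_id E n u : ctx_subst n u (ctx_lift 1 n E) = E.
Proof.
elim: E n => //= [b E IH|E IH t|E IH] n; rewrite ?IH ?subst_tlift_id //.
Qed.

Lemma pure_lift d c E : pure (ctx_lift d c E) = pure E.
Proof. by elim: E. Qed.
Lemma pure_subst n u E : pure (ctx_subst n u E) = pure E.
Proof. by elim: E. Qed.

Lemma is_prog_lift d c p : is_prog (tlift d c p) = is_prog p.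
Proof. case: p => //= i. by case: ifP. Qed.
Lemma is_prog_subst n u p : is_prog p -> is_prog (subst n u p).
Proof. by case: p. Qed.

Fixpoint wf k t : bool :=
  match t with
  | Var i => i < k
  | Lam t => wf k.+1 t
  | App a b => wf k a && wf k b
  | Shift t => wf k.+1 t
  | Reset t => wf k t
  end.

Fixpoint wf_ctx k E : bool :=
  match E with
  | Hole => true
  | CVal b E => wf k.+1 b && wf_ctx k E
  | CAppL E t => wf_ctx k E && wf k t
  | CReset E => wf_ctx k E
  end.

Lemma wf_fv t k : wf k t = all (fun i => i < k) (fv t).
Proof.
elim: t k => [i|t IH|a IHa b IHb|t IH|t IH] k /=.
- by rewrite andbT.
- rewrite all_map all_filter IH. apply: eq_all => i /=. by case: i.
- by rewrite all_cat IHa IHb.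
- rewrite all_map all_filter IH. apply: eq_all => i /=. by case: i.
- by [].
Qed.

Lemma closed_wf t : Defs.closed t <-> wf 0 t.
Proof.
rewrite wf_fv /Defs.closed. case: (fv t) => //= i s.
Qed.

Lemma wf_plug k F x : wf k (plug F x) = wf_ctx k F && wf k x.
Proof.
elim: F => [|b F IH|F IH t|F IH] //=; rewrite ?IH //.
all: by case: (wf_ctx k F); case: (wf k x); try case: (wf k t); try case: (wf k.+1 b).
Qed.

Lemma wf_mono t k k' : wf k t -> k <= k' -> wf k' t.
Proof.
elim: t k k' => [i|t IH|a IHa b IHb|t IH|t IH] k k' /=.
- move=> H1 H2. lia.
- move=> H1 H2. apply: IH H1 _. lia.
- move=> /andP[H1 H2] H3. by rewrite (IHa _ _ H1 H3) (IHb _ _ H2 H3).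
- move=> H1 H2. apply: IH H1 _. lia.
- by move=> H1 H2; apply: IH H1 H2.
Qed.

Lemma wf_ctx_mono E k k' : wf_ctx k E -> k <= k' -> wf_ctx k' E.
Proof.
elim: E => [|b E IH|E IH t|E IH] //=.
- move=> /andP[H1 H2] H3. rewrite (IH H2 H3) andbT. apply: wf_mono H1 _. lia.
- move=> /andP[H1 H2] H3. by rewrite (IH H1 H3) (wf_mono H2 H3).
Qed.

Lemma tlift_wf t d c : wf c t -> tlift d c t = t.
Proof.
elim: t d c => [i|t IH|a IHa b IHb|t IH|t IH] d c /=.
- move=> H. by rewrite leqNgt H.
- by move=> H; rewrite IH.
- by move=> /andP[H1 H2]; rewrite IHa // IHb.
- by move=> H; rewrite IH.
- by move=> H; rewrite IH.
Qed.

Lemma ctx_lift_wf E d c : wf_ctx c E -> ctx_lift d c E = E.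
Proof.
elim: E => [|b E IH|E IH t|E IH] //=.
- by move=> /andP[H1 H2]; rewrite tlift_wf // IH.
- by move=> /andP[H1 H2]; rewrite tlift_wf // IH.
- by move=> H; rewrite IH.
Qed.

Lemma wf_subst t k n u : wf k.+1 t -> n <= k -> wf 0 u -> wf k (subst n u t).
Proof.
elim: t k n => [i|t IH|a IHa b IHb|t IH|t IH] k n /=.
- move=> H1 H2 H3. case: ifP => /= H4; first lia.
  case: ifP => /= H5; last lia.
  rewrite tlift_wf; first (apply: wf_mono H3 _; lia). apply: wf_mono H3 _; lia.
- move=> H1 H2 H3. apply: IH => //.
- move=> /andP[H1 H1'] H2 H3. by rewrite IHa // IHb.
- move=> H1 H2 H3. apply: IH => //.
- move=> H1 H2 H3. apply: IH => //.
Qed.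

Lemma closed_subst0 v b : wf 1 b -> wf 0 v -> wf 0 (subst0 v b).
Proof. move=> H1 H2. by apply: wf_subst. Qed.

Definition Kont (E : ctx) := Lam (Reset (plug (lift_ctx E) (Var 0))).

Inductive topstep : term -> term -> Prop :=
| ts_beta b v : is_value v -> topstep (App (Lam b) v) (subst0 v b)
| ts_shift E t : pure E -> topstep (Reset (plug E (Shift t))) (Reset (subst0 (Kont E) t))
| ts_reset v : is_value v -> topstep (Reset v) v.

Lemma topstep_step F r r' : topstep r r' -> step (plug F r) (plug F r').
Proof. case=> *; [exact: step_beta|exact: step_shift|exact: step_reset]. Qed.

Lemma step_inv t u : step t u -> exists F r r', [/\ topstep r r', t = plug F r & u = plug F r'].
Proof.
case=> [F b v Hv|F E t0 HE|F v Hv].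
- by exists F, (App (Lam b) v), (subst0 v b); split => //; constructor.
- by exists F, (Reset (plug E (Shift t0))), (Reset (subst0 (Kont E) t0)); split => //; constructor.
- by exists F, (Reset v), v; split => //; constructor.
Qed.

Lemma step_ctx G t u : step t u -> step (plug G t) (plug G u).
Proof.
move=> /step_inv [F [r [r' [H -> ->]]]]. rewrite -!plug_comp. exact: topstep_step.
Qed.

Fixpoint dshift t : option (ctx * term) :=
  match t with
  | Shift u => Some (Hole, u)
  | App a b =>
      match dshift a with
      | Some (E, u) => Some (CAppL E b, u)
      | None => match a with
                | Lam bb => match dshift b with
                            | Some (E, u) => Some (CVal bb E, u)
                            | None => None end
                | _ => None end
      end
  | _ => None
  end.

Fixpoint next t : option term :=
  match t with
  | App a b =>
      match next a with
      | Some a' => Some (App a' b)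
      | None => match a with
                | Lam bb => match next b with
                            | Some b' => Some (App a b')
                            | None => if is_value b then Some (subst0 b bb) else None end
                | _ => None end
      end
  | Reset s =>
      match next s with
      | Some s' => Some (Reset s')
      | None => if is_value s then Some s else
                match dshift s with
                | Some (E, u) => Some (Reset (subst0 (Kont E) u))
                | None => None end
      end
  | _ => None
  end.

Lemma plug_shift_shape E u : pure E -> is_value (plug E (Shift u)) = false /\ is_prog (plug E (Shift u)) = false.
Proof. by case: E. Qed.

Lemma stuck_next E u : pure E -> next (plug E (Shift u)) = None /\ dshift (plug E (Shift u)) = Some (E, u).
Proof.
elim: E => [|b E IH|E IH t|E IH] //= HE.
- by case: (IH HE) => -> ->; case: (plug_shift_shape u HE) => -> _.
- case: (IH HE) => -> ->. by case: E HE {IH}.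
Qed.

Lemma topstep_shape r r' : topstep r r' -> is_value r = false.
Proof. by case. Qed.

Lemma plug_redex_notlam F r r' : topstep r r' -> is_value (plug F r) = false.
Proof. move=> H; case: F => //=; exact: topstep_shape H. Qed.

Lemma topstep_next F r r' : topstep r r' -> next (plug F r) = Some (plug F r') /\ dshift (plug F r) = None.
Proof.
move=> H. elim: F => [|b F IH|F IH t|F IH] /=.
- case: H => [b v Hv|E t HE|v Hv] /=.
  + by case: v Hv.
  + by case: (stuck_next t HE) => -> ->; case: (plug_shift_shape t HE) => -> _.
  + by case: v Hv.
- by case: IH => -> ->.
- case: IH => -> ->. by case: (plug F r) (plug_redex_notlam F H).
- by case: IH => -> _.
Qed.

Lemma step_next t u : step t u -> next t = Some u.
Proof. by move=> /step_inv [F [r [r' [H -> ->]]]]; case: (topstep_next F H). Qed.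

Lemma step_det t u w : step t u -> step t w -> u = w.
Proof. move=> H1 H2. have := step_next H1. rewrite (step_next H2). by case. Qed.

Lemma val_nostep v u : is_value v -> ~ step v u.
Proof. by case: v => // b _ /step_next. Qed.

Lemma stuck_nostep E s u : pure E -> ~ step (plug E (Shift s)) u.
Proof. move=> HE /step_next. by case: (stuck_next s HE) => ->. Qed.

Lemma var_nostep i u : ~ step (Var i) u.
Proof. by move/step_next. Qed.

Lemma trichotomy t : wf 0 t ->
  is_value t \/ (exists E u, pure E /\ t = plug E (Shift u)) \/ (exists u, step t u).
Proof.
elim: t => [i|b IH|a IHa b IHb|u IH|s IH] //=.
- by left.
- move=> /andP[Ha Hb]. case: (IHa Ha) => [Va|[[E [u [HE ->]]]|[a' Ha']]].
  + case: a Va {IHa Ha} => // bb _. case: (IHb Hb) => [Vb|[[E [u [HE ->]]]|[b' Hb']]].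
    * right; right. exists (subst0 b bb). exact: (step_beta Hole bb Vb).
    * right; left. by exists (CVal bb E), u.
    * right; right. exists (App (Lam bb) b'). exact: (step_ctx (CVal bb Hole) Hb').
  + right; left. by exists (CAppL E b), u.
  + right; right. exists (App a' b). exact: (step_ctx (CAppL Hole b) Ha').
- move=> _. right; left. by exists Hole, u.
- move=> Hs. right; right. case: (IH Hs) => [Vs|[[E [u [HE ->]]]|[s' Hs']]].
  + exists s. exact: (step_reset Hole Vs).
  + eexists. exact: (step_shift Hole u HE).
  + exists (Reset s'). exact: (step_ctx (CReset Hole) Hs').
Qed.

Lemma steps_trans t u w : steps t u -> steps u w -> steps t w.
Proof. elim=> // t0 u0 w0 H _ IH Huw. apply: steps_step H (IH Huw). Qed.

Lemma steps_one t u : step t u -> steps t u.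
Proof. move=> H. apply: steps_step H (steps_refl _). Qed.

Lemma steps_ctx G t u : steps t u -> steps (plug G t) (plug G u).
Proof. elim=> [t0|t0 u0 w0 H _ IH]; first exact: steps_refl. apply: steps_step (step_ctx G H) IH. Qed.

Definition steps1 t u := exists2 w, step t w & steps w u.

Lemma steps1_steps t u : steps1 t u -> steps t u.
Proof. case=> w H1 H2. exact: steps_step H1 H2. Qed.

Lemma steps1_one t u : step t u -> steps1 t u.
Proof. move=> H. exists u => //. exact: steps_refl. Qed.

Lemma steps1_trans_l t u w : steps1 t u -> steps u w -> steps1 t w.
Proof. case=> x H1 H2 H3. exists x => //. exact: steps_trans H2 H3. Qed.

Lemma steps1_trans_r t u w : steps t u -> steps1 u w -> steps1 t w.
Proof.
case=> [t0|t0 u0 w0 H1 H2] H3 //. exists u0 => //. exact: steps_trans H2 (steps1_steps H3).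
Qed.

Lemma steps1_ctx G t u : steps1 t u -> steps1 (plug G t) (plug G u).
Proof. case=> w H1 H2. exists (plug G w); [exact: step_ctx|exact: steps_ctx]. Qed.

Lemma Kont_wf E : wf_ctx 0 E -> wf 0 (Kont E).
Proof.
move=> H. rewrite /Kont /= lift_ctxE ctx_lift_wf // wf_plug /= andbT.
apply: wf_ctx_mono H _. done.
Qed.

Lemma topstep_wf r r' : topstep r r' -> wf 0 r -> wf 0 r'.
Proof.
case=> [b v Hv|E t HE|v Hv] /=.
- move=> /andP[H1 H2]. exact: closed_subst0.
- rewrite wf_plug /= => /andP[H1 H2]. apply: closed_subst0 => //. exact: Kont_wf.
- done.
Qed.

Lemma step_wf t u : step t u -> wf 0 t -> wf 0 u.
Proof.
move=> /step_inv [F [r [r' [H -> ->]]]]. rewrite !wf_plug => /andP[H1 H2].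
by rewrite H1 (topstep_wf H H2).
Qed.

Lemma steps_wf t u : steps t u -> wf 0 t -> wf 0 u.
Proof. elim=> // t0 u0 w0 H _ IH H0. exact: IH (step_wf H H0). Qed.

Lemma step_prog p q : step p q -> is_prog p -> is_prog q || is_value q.
Proof.
move=> /step_inv [F [r [r' [H -> ->]]]]. case: F => [|b F|F t|F] //=. case: H => //= v Hv _; by rewrite Hv orbT.
Qed.

Lemma steps_val v w : steps v w -> is_value v -> w = v.
Proof. case=> // x y z H _ Hv. by case: (val_nostep Hv H). Qed.

Lemma steps_prog p q : steps p q -> is_prog p -> is_prog q || is_value q.
Proof.
elim=> [t0 ->|t0 u0 w0 H Hs IH Hp] //.
case/orP: (step_prog H Hp) => [Hu|Hu]; first exact: IH.
by rewrite (steps_val Hs Hu) Hu orbT.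
Qed.

Definition SK t := Shift (App (Var 0) (tlift 1 0 t)).

Inductive R : term -> term -> Prop :=
| R_var i : R (Var i) (Var i)
| R_lam a b : R a b -> R (Lam a) (Lam b)
| R_app a0 a1 b0 b1 : R a0 a1 -> R b0 b1 -> R (App a0 b0) (App a1 b1)
| R_shift a b : R a b -> R (Shift a) (Shift b)
| R_rst E0 E1 s0 s1 : Cx E0 E1 -> R s0 s1 -> R (Reset (plug E0 s0)) (Reset (plug E1 s1))
| R_sk t t' : R t t' -> R t (SK t')
| R_rr p p' : R p p' -> is_prog p -> is_prog p' -> R p (Reset p')
with Cx : ctx -> ctx -> Prop :=
| Cx_hole : Cx Hole Hole
| Cx_val E0 E1 b0 b1 : Cx E0 E1 -> R b0 b1 ->
    Cx (comp E0 (CVal b0 Hole)) (comp E1 (CVal b1 Hole))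
| Cx_app E0 E1 t0 t1 : Cx E0 E1 -> R t0 t1 ->
    Cx (comp E0 (CAppL Hole t0)) (comp E1 (CAppL Hole t1))
| Cx_K E0 E1 : Cx E0 E1 -> Cx E0 (CVal (Reset (plug (lift_ctx E1) (Var 0))) Hole).

Scheme R_mut := Induction for R Sort Prop
with Cx_mut := Induction for Cx Sort Prop.

Lemma Cx_pure E0 E1 : Cx E0 E1 -> pure E0 /\ pure E1.
Proof.
elim=> //= [F0 F1 b0 b1 _ [H0 H1] _|F0 F1 t0 t1 _ [H0 H1] _|F0 F1 _ [H0 H1]];
  by rewrite ?pure_comp ?H0 ?H1.
Qed.

Lemma SK_lift d c t : tlift d c (SK t) = SK (tlift d c t).
Proof.
rewrite /SK /=. by have := @tlift_tlift t d c 1 0 isT; rewrite addn1 => ->.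
Qed.

Lemma SK_subst n u t : subst n u (SK t) = SK (subst n u t).
Proof. rewrite /SK /=. by rewrite subst_tlift. Qed.

Lemma R_lift_mut :
  (forall x y, R x y -> forall d c, R (tlift d c x) (tlift d c y)) /\
  (forall E0 E1, Cx E0 E1 -> forall d c, Cx (ctx_lift d c E0) (ctx_lift d c E1)).
Proof.
pose P := (fun x y (_ : R x y) => forall d c, R (tlift d c x) (tlift d c y)).
pose P0 := (fun E0 E1 (_ : Cx E0 E1) => forall d c, Cx (ctx_lift d c E0) (ctx_lift d c E1)).
split; [apply (@R_mut P P0)|apply (@Cx_mut P P0)]; rewrite /P /P0 {P P0}.
all: try (move=> i d c /=; case: ifP => _; exact: R_var).
all: try (move=> a b _ IH d c /=; constructor; exact: IH).
all: try (move=> a0 a1 b0 b1 _ IHa _ IHb d c /=; constructor; [exact: IHa|exact: IHb]).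
all: try (move=> E0 E1 s0 s1 _ IHE _ IHs d c /=; rewrite !tlift_plug; constructor; [exact: IHE|exact: IHs]).
all: try (move=> t t' _ IH d c; rewrite SK_lift; constructor; exact: IH).
all: try (move=> p p' _ IH Hp Hp' d c /=; constructor; [exact: IH|by rewrite is_prog_lift|by rewrite is_prog_lift]).
all: try (move=> d c; exact: Cx_hole).
all: try (move=> E0 E1 b0 b1 _ IHE _ IHb d c; rewrite !ctx_lift_comp /=; constructor; [exact: IHE|exact: IHb]).
all: try (move=> E0 E1 _ IHE d c; rewrite /= tlift_plug /= lift_ctxE ctx_lift_lift -lift_ctxE; exact: (Cx_K (IHE d c))).
Qed.

Lemma R_lift x y d c : R x y -> R (tlift d c x) (tlift d c y).
Proof. move=> H. exact: (proj1 R_lift_mut). Qed.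
Lemma Cx_lift E0 E1 d c : Cx E0 E1 -> Cx (ctx_lift d c E0) (ctx_lift d c E1).
Proof. move=> H. exact: (proj2 R_lift_mut). Qed.

Lemma R_subst_mut :
  (forall x y, R x y -> forall n u0 u1, R u0 u1 -> R (subst n u0 x) (subst n u1 y)) /\
  (forall E0 E1, Cx E0 E1 -> forall n u0 u1, R u0 u1 -> Cx (ctx_subst n u0 E0) (ctx_subst n u1 E1)).
Proof.
pose P := (fun x y (_ : R x y) => forall n u0 u1, R u0 u1 -> R (subst n u0 x) (subst n u1 y)).
pose P0 := (fun E0 E1 (_ : Cx E0 E1) => forall n u0 u1, R u0 u1 -> Cx (ctx_subst n u0 E0) (ctx_subst n u1 E1)).
split; [apply (@R_mut P P0)|apply (@Cx_mut P P0)]; rewrite /P /P0 {P P0}.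
all: try (move=> i n u0 u1 Hu /=; case: ifP => _; [exact: R_var|case: ifP => _; [exact: R_lift|exact: R_var]]).
all: try (move=> a b _ IH n u0 u1 Hu /=; constructor; exact: IH).
all: try (move=> a0 a1 b0 b1 _ IHa _ IHb n u0 u1 Hu /=; constructor; [exact: IHa|exact: IHb]).
all: try (move=> E0 E1 s0 s1 _ IHE _ IHs n u0 u1 Hu /=; rewrite !subst_plug; constructor; [exact: IHE|exact: IHs]).
all: try (move=> t t' _ IH n u0 u1 Hu; rewrite SK_subst; constructor; exact: IH).
all: try (move=> p p' _ IH Hp Hp' n u0 u1 Hu /=; constructor; [exact: IH|exact: is_prog_subst|exact: is_prog_subst]).
all: try (move=> n u0 u1 Hu; exact: Cx_hole).
all: try (move=> E0 E1 b0 b1 _ IHE _ IHb n u0 u1 Hu; rewrite !ctx_subst_comp /=; constructor; [exact: IHE|exact: IHb]).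
all: try (move=> E0 E1 _ IHE n u0 u1 Hu; rewrite /= subst_plug /= lift_ctxE ctx_subst_lift -lift_ctxE; exact: (Cx_K (IHE n u0 u1 Hu))).
Qed.

Lemma R_subst x y n u0 u1 : R x y -> R u0 u1 -> R (subst n u0 x) (subst n u1 y).
Proof. move=> H Hu. exact: (proj1 R_subst_mut). Qed.

Lemma R_refl t : R t t.
Proof.
elim: t => [i|t IH|a IHa b IHb|t IH|t IH]; try by constructor.
have := R_rst Cx_hole IH. by [].
Qed.

Lemma R_lam_inv a b : R (Lam a) (Lam b) -> R a b.
Proof. by move=> H; inversion H. Qed.

Fixpoint SKn n t := if n is n'.+1 then SK (SKn n' t) else t.
Fixpoint Rn n t := if n is n'.+1 then Reset (Rn n' t) else t.
Fixpoint RnC n := if n is n'.+1 then CReset (RnC n') else Hole.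

Lemma RnC_plug n t : plug (RnC n) t = Rn n t.
Proof. by elim: n => //= n ->. Qed.

Lemma Rn_S n t : Rn n (Reset t) = Reset (Rn n t).
Proof. by elim: n => //= n ->. Qed.

Lemma Rn_add n m t : Rn n (Rn m t) = Rn (n + m) t.
Proof. by elim: n => //= n ->. Qed.

Lemma R_val v x : R v x -> is_value v -> exists n w, [/\ x = SKn n w, is_value w & R v w].
Proof.
elim=> //.
- move=> a b H _ _. by exists 0, (Lam b); split => //; constructor.
- move=> t t' H IH Hv. case: (IH Hv) => n [w [-> Hw Hr]]. by exists n.+1, w.
- by move=> p p' _ _ Hp _ Hv; case: p Hp Hv.
Qed.

Lemma R_prog_nonval a b : R a b -> is_prog a -> is_value b = false.
Proof. by case. Qed.

Lemma R_Rn a b n : R a b -> is_prog a -> is_prog b -> R a (Rn n b).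
Proof.
move=> H Ha Hb. elim: n => //= n IH. apply: R_rr => //. by case: n {IH}.
Qed.

Lemma subst_Kont_body E v : subst0 v (Reset (plug (lift_ctx E) (Var 0))) = Reset (plug E v).
Proof.
rewrite /subst0 /= subst_plug lift_ctxE ctx_subst_lift_id /=. by rewrite tlift0.
Qed.

Lemma subst_SK_body K t : subst0 K (App (Var 0) (tlift 1 0 t)) = App K t.
Proof. by rewrite /subst0 /= tlift0 subst_tlift_id. Qed.

Lemma SKfire E v n : pure E -> is_value v ->
  steps (Reset (plug E (SKn n v))) (Rn n (Reset (plug E v))).
Proof.
elim: n E => [|n IH] E HE Hv /=; first exact: steps_refl.
apply: steps_step.
  have := step_shift Hole (App (Var 0) (tlift 1 0 (SKn n v))) HE. rewrite /= subst_SK_body. exact.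
have HE' : pure (CVal (Reset (plug (lift_ctx E) (Var 0))) Hole) by [].
apply: steps_trans (IH _ HE' Hv) _.
rewrite -Rn_S -!RnC_plug. apply: steps_ctx. apply: steps_one.
have := step_beta (CReset Hole) (Reset (plug (lift_ctx E) (Var 0))) Hv.
by rewrite /= subst_Kont_body.
Qed.

Definition MR x0 x1 :=
 (wf 0 x0 -> is_prog x0 -> is_prog x1 -> forall x0', step x0 x0' ->
     exists2 x1', steps1 x1 x1' & R x0' x1')
 /\ (forall E u, pure E -> x0 = plug E (Shift u) -> forall E0 E1, Cx E0 E1 ->
     exists2 b', steps1 (Reset (plug E1 x1)) b' & R (Reset (subst0 (Kont (comp E0 E)) u)) b')
 /\ (wf 0 x0 -> forall x0', step x0 x0' -> forall E0 E1, Cx E0 E1 ->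
     exists2 b', steps1 (Reset (plug E1 x1)) b' & R (Reset (plug E0 x0')) b').

Definition MC E0 E1 := forall v0 v1, is_value v0 -> is_value v1 -> R v0 v1 ->
  wf 0 (plug E0 v0) -> forall a', step (Reset (plug E0 v0)) a' ->
  exists2 b', steps1 (Reset (plug E1 v1)) b' & R a' b'.

Lemma plugsh_shape E u : pure E ->
  match plug E (Shift u) with Shift _ | App _ _ => True | _ => False end.
Proof. by case: E. Qed.

Lemma plugsh_shift E u a : pure E -> plug E (Shift u) = Shift a -> E = Hole /\ u = a.
Proof. case: E => //= _ [->]. by []. Qed.

Lemma plugsh_app E u a b : pure E -> plug E (Shift u) = App a b ->
  (exists2 E', E = CAppL E' b & a = plug E' (Shift u) /\ pure E') \/
  (exists bb E', [/\ E = CVal bb E', a = Lam bb, b = plug E' (Shift u) & pure E']).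
Proof.
case: E => //= [bb E' HE [<- <-]|E' t HE [<- <-]].
- right. by exists bb, E'.
- left. by exists E'.
Qed.

Lemma Rn_val_steps k w : is_value w -> steps (Rn k w) w.
Proof.
move=> Hw. elim: k => [|k IH] /=; first exact: steps_refl.
apply: steps_trans (steps_ctx (CReset Hole) IH) _. apply: steps_one.
exact: (step_reset Hole Hw).
Qed.

Lemma wrapRn k a b : R a b -> is_prog a || is_value a -> is_prog b || is_value b ->
  exists2 b', steps (Rn k b) b' & R a b'.
Proof.
move=> H /orP[Ha|Ha] Hb.
- exists (Rn k b); first exact: steps_refl. apply: R_Rn => //.
  by move: Hb; rewrite (R_prog_nonval H Ha) orbF.
- case: (R_val H Ha) => n [w [Ew Hw Hr]]. subst b.
  case: n Hb H => [|n] /=; last by [].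
  move=> _ _. exists w => //. exact: Rn_val_steps.
Qed.

Lemma R_Kont E0 E1 : Cx E0 E1 -> R (Kont E0) (Kont E1).
Proof.
move=> C. rewrite /Kont !lift_ctxE. apply: R_lam. apply: R_rst; last exact: R_var.
exact: Cx_lift.
Qed.

Lemma steps1_prog p q : steps1 p q -> is_prog p -> is_prog q || is_value q.
Proof. move=> /steps1_steps. exact: steps_prog. Qed.

Lemma val_lam v : is_value v -> exists b, v = Lam b.
Proof. case: v => // b _. by exists b. Qed.

Lemma R_val_lam bb x : R (Lam bb) x -> exists n bb1, x = SKn n (Lam bb1) /\ R bb bb1.
Proof.
move=> H. case: (R_val H isT) => n [w [-> Hw Hr]]. case: (val_lam Hw) => bb1 E; subst w.
exists n, bb1. split => //. exact: R_lam_inv.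
Qed.

Lemma steps1_Rn n t u : steps1 t u -> steps1 (Rn n t) (Rn n u).
Proof. rewrite -!RnC_plug. exact: steps1_ctx. Qed.

Lemma steps_Rn n t u : steps t u -> steps (Rn n t) (Rn n u).
Proof. rewrite -!RnC_plug. exact: steps_ctx. Qed.

Lemma CR_of_P x0 x1 : is_prog x0 -> is_prog x1 ->
  (wf 0 x0 -> is_prog x0 -> is_prog x1 -> forall x0', step x0 x0' ->
     exists2 x1', steps1 x1 x1' & R x0' x1') ->
  (wf 0 x0 -> forall x0', step x0 x0' -> forall E0 E1, Cx E0 E1 ->
     exists2 b', steps1 (Reset (plug E1 x1)) b' & R (Reset (plug E0 x0')) b').
Proof.
move=> H0 H1 P W x0' Hs E0 E1 C. case: (P W H0 H1 _ Hs) => x1' S Hr.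
exists (Reset (plug E1 x1')). exact: (steps1_ctx (CReset E1) S). exact: R_rst.
Qed.

Lemma noCS_prog x0 : is_prog x0 -> forall E u, pure E -> x0 = plug E (Shift u) -> False.
Proof. move=> Hp E u HE Ex. by case: (plug_shift_shape u HE); rewrite -Ex Hp. Qed.

Lemma MR_var i : MR (Var i) (Var i).
Proof.
split; [done|split].
- move=> E u HE Ex. by have := plugsh_shape u HE; rewrite -Ex.
- done.
Qed.

Lemma MR_lam a b : MR (Lam a) (Lam b).
Proof.
split; [done|split].
- move=> E u HE Ex. by have := plugsh_shape u HE; rewrite -Ex.
- move=> _ x0' Hs. by case: (val_nostep (isT : is_value (Lam a)) Hs).
Qed.

Lemma MR_shift a b : R a b -> MR (Shift a) (Shift b).
Proof.
move=> H. split; [done|split].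
- move=> E u HE Ex E0 E1 C. case: (plugsh_shift HE (esym Ex)) => ? ?; subst E u.
  have [_ P1] := Cx_pure C.
  exists (Reset (subst0 (Kont E1) b)).
    apply: steps1_one. exact: (step_shift Hole b P1).
  rewrite comp_hole. apply: (R_rst Cx_hole). apply: R_subst => //. exact: R_Kont.
- move=> _ x0' Hs. by case: (@stuck_nostep Hole a x0' isT Hs).
Qed.

Lemma shift_SK_step E1 t : pure E1 ->
  step (Reset (plug E1 (SK t))) (Reset (plug (CVal (Reset (plug (lift_ctx E1) (Var 0))) Hole) t)).
Proof.
move=> HE. have := step_shift Hole (App (Var 0) (tlift 1 0 t)) HE.
by rewrite /= subst_SK_body.
Qed.

Lemma MR_sk t t' : MR t t' -> MR t (SK t').
Proof.
case=> _ [CS CR]. split; [done|split].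
- move=> E u HE Ex E0 E1 C. have [_ P1] := Cx_pure C.
  case: (CS E u HE Ex _ _ (Cx_K C)) => b' S Hr. exists b' => //.
  apply: steps1_trans_r S. apply: steps_one. exact: shift_SK_step.
- move=> W x0' Hs E0 E1 C. have [_ P1] := Cx_pure C.
  case: (CR W _ Hs _ _ (Cx_K C)) => b' S Hr. exists b' => //.
  apply: steps1_trans_r S. apply: steps_one. exact: shift_SK_step.
Qed.

Lemma MR_rr p p' : R p p' -> MR p p' -> is_prog p -> is_prog p' -> MR p (Reset p').
Proof.
move=> H [P _] Hp Hp'.
have PP : wf 0 p -> is_prog p -> is_prog (Reset p') -> forall x0', step p x0' ->
     exists2 x1', steps1 (Reset p') x1' & R x0' x1'.
  move=> W _ _ x0' Hs. case: (P W Hp Hp' _ Hs) => p'' S Hr.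
  case: (wrapRn 1 Hr (step_prog Hs Hp) (steps1_prog S Hp')) => b' S2 Hr2.
  exists b' => //. apply: steps1_trans_l S2. exact: (steps1_ctx (CReset Hole) S).
split; [exact: PP|split].
- move=> E u HE Ex. by case: (noCS_prog Hp HE Ex).
- exact: CR_of_P.
Qed.

Lemma MC_hole : MC Hole Hole.
Proof.
move=> v0 v1 H0 H1 H W a' Hs. rewrite /= in Hs.
have := step_det Hs (step_reset Hole H0) => /= ->.
exists v1 => //. apply: steps1_one. exact: (step_reset Hole H1).
Qed.

Lemma MC_val E0 E1 b0 b1 : Cx E0 E1 -> R b0 b1 ->
  MC (comp E0 (CVal b0 Hole)) (comp E1 (CVal b1 Hole)).
Proof.
move=> C Hb v0 v1 H0 H1 H W a' Hs. rewrite plug_comp /= in Hs *. rewrite plug_comp /=.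
have := step_det Hs (step_beta (CReset E0) b0 H0) => /= ->.
exists (Reset (plug E1 (subst0 v1 b1))).
  apply: steps1_one. exact: (step_beta (CReset E1) b1 H1).
apply: R_rst => //. exact: R_subst.
Qed.

Lemma MC_K E0 E1 : MC E0 E1 -> MC E0 (CVal (Reset (plug (lift_ctx E1) (Var 0))) Hole).
Proof.
move=> IH v0 v1 H0 H1 H W a' Hs.
case: (IH _ _ H0 H1 H W _ Hs) => b'' S Hr.
have Sb : step (Reset (plug (CVal (Reset (plug (lift_ctx E1) (Var 0))) Hole) v1))
               (Reset (Reset (plug E1 v1))).
  have := step_beta (CReset Hole) (Reset (plug (lift_ctx E1) (Var 0))) H1.
  by rewrite /= subst_Kont_body.
case: (wrapRn 1 Hr (step_prog Hs isT) (steps1_prog S isT)) => b' S2 Hr2.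
exists b' => //. apply: steps1_trans_l S2. apply: steps1_trans_r (steps_one Sb) _.
exact: (steps1_ctx (CReset Hole) S).
Qed.

Lemma MR_rst E0 E1 s0 s1 : Cx E0 E1 -> MC E0 E1 -> R s0 s1 -> MR s0 s1 ->
  MR (Reset (plug E0 s0)) (Reset (plug E1 s1)).
Proof.
move=> C IHC Hs [_ [CS CR]]. have [P0 P1] := Cx_pure C.
have PP : wf 0 (Reset (plug E0 s0)) -> is_prog (Reset (plug E0 s0)) -> is_prog (Reset (plug E1 s1)) ->
   forall x0', step (Reset (plug E0 s0)) x0' ->
     exists2 x1', steps1 (Reset (plug E1 s1)) x1' & R x0' x1'.
  move=> W _ _ x0' Hst. have W' := W. rewrite /= wf_plug in W'. case/andP: W' => WE Ws.
  case: (trichotomy Ws) => [Vs|[[E [u [HE Es]]]|[s0' Hs0]]].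
  - case: (R_val Hs Vs) => n [w [Ew Hw Hr]]. subst s1.
    case: (IHC _ _ Vs Hw Hr W _ Hst) => b'' S Hr2.
    case: (wrapRn n Hr2 (step_prog Hst isT) (steps1_prog S isT)) => b' S2 Hr3.
    exists b' => //. apply: steps1_trans_r (SKfire n P1 Hw) _.
    apply: steps1_trans_l S2. exact: steps1_Rn.
  - subst s0. have HE' : pure (comp E0 E) by rewrite pure_comp P0.
    have := step_shift Hole u HE'. rewrite /= plug_comp => Hst'.
    rewrite (step_det Hst Hst'). exact: (CS E u HE erefl E0 E1 C).
  - have := step_ctx (CReset E0) Hs0 => /= Hst'. rewrite (step_det Hst Hst').
    exact: (CR Ws _ Hs0 E0 E1 C).
split; [exact: PP|split].
- move=> E u HE Ex. by case: (@noCS_prog (Reset (plug E0 s0)) isT E u HE Ex).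
- exact: CR_of_P.
Qed.

Lemma MC_app E0 E1 t0 t1 : Cx E0 E1 -> R t0 t1 -> MR t0 t1 ->
  MC (comp E0 (CAppL Hole t0)) (comp E1 (CAppL Hole t1)).
Proof.
move=> C Ht [_ [CS CR]] v0 v1 H0 H1 H W a' Hst. have [P0 P1] := Cx_pure C.
rewrite plug_comp /= in Hst W *. rewrite plug_comp /=.
case: (val_lam H0) => bb Ev0. subst v0.
case: (R_val_lam H) => n [bb1 [Ev1 Hbb]]. case: n Ev1 => [|n] /= Ev1; last by rewrite Ev1 in H1.
subst v1.
have C' := Cx_val C Hbb.
rewrite wf_plug /= in W. case/and3P: W => WE _ Wt.
case: (trichotomy Wt) => [Vt|[[E [u [HE Es]]]|[t0' Ht0]]].
- case: (R_val Ht Vt) => m [w [Ew Hw Hr]]. subst t1.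
  rewrite (step_det Hst (step_beta (CReset E0) bb Vt)) /=.
  exists (Rn m (Reset (plug E1 (subst0 w bb1)))).
  + have HEc : pure (comp E1 (CVal bb1 Hole)) by rewrite pure_comp P1.
    have := SKfire m HEc Hw. rewrite !plug_comp /= => S. apply: steps1_trans_r S _.
    apply: steps1_Rn. apply: steps1_one. exact: (step_beta (CReset E1) bb1 Hw).
  + apply: R_Rn => //. apply: R_rst => //. exact: R_subst.
- subst t0. have HE' : pure (comp E0 (CVal bb E)) by rewrite pure_comp P0.
  have := step_shift Hole u HE'. rewrite /= plug_comp /= => Hst'.
  rewrite (step_det Hst Hst').
  case: (CS E u HE erefl _ _ C') => b' S Hr. exists b'.
  + by move: S; rewrite plug_comp.
  + by move: Hr; rewrite comp_assoc.
- have := step_ctx (CReset (comp E0 (CVal bb Hole))) Ht0. rewrite /= plug_comp /= => Hst'.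
  rewrite (step_det Hst Hst').
  case: (CR Wt _ Ht0 _ _ C') => b' S Hr. exists b'.
  + by move: S; rewrite plug_comp.
  + by move: Hr; rewrite plug_comp.
Qed.

Lemma SKfire_fun E1 n L y : pure E1 -> is_value L ->
  steps (Reset (plug E1 (App (SKn n L) y))) (Rn n (Reset (plug E1 (App L y)))).
Proof.
move=> P1 HL. have HE : pure (comp E1 (CAppL Hole y)) by rewrite pure_comp P1.
have := SKfire n HE HL. by rewrite !plug_comp.
Qed.

Lemma SKfire_arg E1 m bL w : pure E1 -> is_value w ->
  steps (Reset (plug E1 (App (Lam bL) (SKn m w)))) (Rn m (Reset (plug E1 (App (Lam bL) w)))).
Proof.
move=> P1 Hw. have HE : pure (comp E1 (CVal bL Hole)) by rewrite pure_comp P1.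
have := SKfire m HE Hw. by rewrite !plug_comp.
Qed.

Lemma MR_app a0 a1 b0 b1 : R a0 a1 -> MR a0 a1 -> R b0 b1 -> MR b0 b1 ->
  MR (App a0 b0) (App a1 b1).
Proof.
move=> Ha [_ [CSa CRa]] Hb [_ [CSb CRb]]. split; [done|split].
- move=> E u HE Ex E0 E1 C. have [P0 P1] := Cx_pure C.
  case: (plugsh_app HE (esym Ex)) => [[E' -> [Ea HE']]|[bb [E' [-> Ea Eb HE']]]].
  + case: (CSa E' u HE' Ea _ _ (Cx_app C Hb)) => b' S Hr. exists b'.
    * by move: S; rewrite plug_comp.
    * by move: Hr; rewrite comp_assoc.
  + subst a0 b0. case: (R_val_lam Ha) => n [bb1 [-> Hbb]].
    case: (CSb E' u HE' erefl _ _ (Cx_val C Hbb)) => b'' S Hr.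
    move: S Hr; rewrite plug_comp comp_assoc /= => S Hr.
    have Pb'' : is_prog b''.
      by move: (steps1_prog S isT); rewrite (R_prog_nonval Hr isT) orbF.
    exists (Rn n b'').
    * apply: steps1_trans_r (@SKfire_fun E1 n (Lam bb1) b1 P1 isT) _. exact: steps1_Rn.
    * exact: R_Rn.
- move=> W x0' Hst E0 E1 C. have [P0 P1] := Cx_pure C.
  rewrite /= in W. case/andP: W => Wa Wb.
  case: (trichotomy Wa) => [Va|[[E [u [HE Ea]]]|[a0' Ha0]]].
  + case: (val_lam Va) => bb Ea0. subst a0.
    case: (R_val_lam Ha) => n [bb1 [-> Hbb]].
    case: (trichotomy Wb) => [Vb|[[E [u [HE Eb]]]|[b0' Hb0]]].
    * rewrite (step_det Hst (step_beta Hole bb Vb)) /=.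
      case: (R_val Hb Vb) => m [w [-> Hw Hr]].
      exists (Rn n (Rn m (Reset (plug E1 (subst0 w bb1))))).
      - apply: steps1_trans_r (@SKfire_fun E1 n (Lam bb1) (SKn m w) P1 isT) _.
        apply: steps1_Rn. apply: steps1_trans_r (SKfire_arg m bb1 P1 Hw) _.
        apply: steps1_Rn. apply: steps1_one. exact: (step_beta (CReset E1) bb1 Hw).
      - rewrite Rn_add. apply: R_Rn => //. apply: R_rst => //. exact: R_subst.
    * subst b0. by case: (@stuck_nostep (CVal bb E) u x0' HE Hst).
    * have := step_ctx (CVal bb Hole) Hb0 => /= Hst'. rewrite (step_det Hst Hst').
      case: (CRb Wb _ Hb0 _ _ (Cx_val C Hbb)) => b'' S Hr.
      move: S Hr; rewrite !plug_comp /= => S Hr.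
      have Pb'' : is_prog b''.
        by move: (steps1_prog S isT); rewrite (R_prog_nonval Hr isT) orbF.
      exists (Rn n b'').
      - apply: steps1_trans_r (@SKfire_fun E1 n (Lam bb1) b1 P1 isT) _. exact: steps1_Rn.
      - exact: R_Rn.
  + subst a0. by case: (@stuck_nostep (CAppL E b0) u x0' HE Hst).
  + have := step_ctx (CAppL Hole b0) Ha0 => /= Hst'. rewrite (step_det Hst Hst').
    case: (CRa Wa _ Ha0 _ _ (Cx_app C Hb)) => b' S Hr. exists b'.
    * by move: S; rewrite plug_comp.
    * by move: Hr; rewrite plug_comp.
Qed.

Theorem core_mut :
  (forall x y, R x y -> MR x y) /\ (forall E0 E1, Cx E0 E1 -> MC E0 E1).
Proof.
pose P := (fun x y (_ : R x y) => MR x y).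
pose P0 := (fun E0 E1 (_ : Cx E0 E1) => MC E0 E1).
split; [apply (@R_mut P P0)|apply (@Cx_mut P P0)]; rewrite /P /P0 {P P0}.
all: try (move=> i; exact: MR_var).
all: try (move=> a b _ _; exact: MR_lam).
all: try (move=> a0 a1 b0 b1 Ha IHa Hb IHb; exact: MR_app).
all: try (move=> a b Hab _; exact: MR_shift).
all: try (move=> E0 E1 s0 s1 C IHC Hs IHs; exact: MR_rst).
all: try (move=> t t' _ IH; exact: MR_sk).
all: try (move=> p p' H IH Hp Hp'; exact: MR_rr).
all: try exact: MC_hole.
all: try (move=> E0 E1 b0 b1 C _ Hb _; exact: MC_val).
all: try (move=> E0 E1 t0 t1 C _ Ht IHt; exact: MC_app).
all: try (move=> E0 E1 C IHC; exact: MC_K).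
Qed.

Lemma forward p0 p1 p0' : R p0 p1 -> wf 0 p0 -> is_prog p0 -> is_prog p1 ->
  step p0 p0' -> exists2 p1', steps1 p1 p1' & R p0' p1'.
Proof. move=> H W H0 H1 Hs. case: ((proj1 core_mut) _ _ H) => P _. exact: P. Qed.

Lemma tilde_R (E : Defs.rel) a b : (forall x y, E x y -> R x y) -> tilde_gen E a b -> R a b.
Proof.
move=> HE. elim=> {a b} [a b H|i|a b _ IH|a0 a1 b0 b1 _ IHa _ IHb|a b _ IH|a b _ IH].
- exact: HE.
- exact: R_var.
- exact: R_lam.
- exact: R_app.
- exact: R_shift.
- exact: (R_rst Cx_hole IH).
Qed.

Lemma hat_Cx (E : Defs.rel) E0 E1 : (forall x y, E x y -> R x y) -> hat E E0 E1 -> pure E0 ->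
  forall X0 X1, Cx X0 X1 -> Cx (comp X0 E0) (comp X1 E1).
Proof.
move=> HE. elim=> {E0 E1} [|b0 b1 F0 F1 _ IH [Ht _]|F0 F1 t0 t1 _ IH [Ht _]|F0 F1 _ IH] //=.
- by move=> _ X0 X1 C; rewrite !comp_hole.
- move=> HP X0 X1 C.
  have -> : comp X0 (CVal b0 F0) = comp (comp X0 (CVal b0 Hole)) F0 by rewrite comp_assoc.
  have -> : comp X1 (CVal b1 F1) = comp (comp X1 (CVal b1 Hole)) F1 by rewrite comp_assoc.
  apply: IH => //. apply: Cx_val C _. apply: R_lam_inv. exact: tilde_R Ht.
- move=> HP X0 X1 C.
  have -> : comp X0 (CAppL F0 t0) = comp (comp X0 (CAppL Hole t0)) F0 by rewrite comp_assoc.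
  have -> : comp X1 (CAppL F1 t1) = comp (comp X1 (CAppL Hole t1)) F1 by rewrite comp_assoc.
  apply: IH => //. apply: Cx_app C _. exact: tilde_R Ht.
Qed.

Lemma hat_wf (E : Defs.rel) E0 E1 : hat E E0 E1 -> wf_ctx 0 E0 /\ wf_ctx 0 E1.
Proof.
elim=> {E0 E1} [|b0 b1 F0 F1 _ [H0 H1] [_ [C0 C1]]|F0 F1 t0 t1 _ [H0 H1] [_ [C0 C1]]|F0 F1 _ [H0 H1]] //=.
- move: C0 C1; rewrite !closed_wf /= => -> ->. by rewrite H0 H1.
- move: C0 C1; rewrite !closed_wf /= => -> ->. by rewrite H0 H1.
Qed.

Lemma steps_inv t u : steps t u -> t = u \/ exists2 y, step t y & steps y u.
Proof. case=> [x|x y z H1 H2]; [by left|right; by exists y]. Qed.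

Definition envR (E : Defs.rel) := env_ok E /\ (forall a b, E a b -> R a b).

Definition Xtri (E : Defs.rel) t0 t1 :=
  [/\ envR E, wf 0 t0, wf 0 t1 &
     R t0 t1 \/ [/\ is_prog t0, is_prog t1 &
                    exists a b, [/\ steps t0 a, steps t1 b & R a b]]].

Definition X := EnvRel envR Xtri.

Lemma Xtri_T E t0 t1 : Xtri E t0 t1 -> is_prog t0 -> is_prog t1 ->
  exists a b, [/\ steps t0 a, steps t1 b & R a b].
Proof.
case=> _ _ _ [H|[_ _ H]] _ _ //. exists t0, t1. split => //; exact: steps_refl.
Qed.

Lemma R_val_progval v b : R v b -> is_value v -> is_prog b || is_value b -> is_value b.
Proof.
move=> H Hv Hb. case: (R_val H Hv) => n [w [Ew Hw _]]. subst b. case: n Hb H => [|n] //=.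
Qed.

Lemma R_prog_progval a b : R a b -> is_prog b -> is_prog a || is_value a -> is_prog a.
Proof.
move=> H Hb /orP[//|Ha]. have := R_val_progval H Ha. by rewrite Hb => /(_ isT); case: b Hb {H}.
Qed.

Lemma prog_step p : wf 0 p -> is_prog p -> exists p', step p p'.
Proof.
move=> W Hp. case: (trichotomy W) => [Hv|[[E [u [HE Ep]]]|//]].
- by case: p Hp Hv W.
- by case: (noCS_prog Hp HE Ep).
Qed.

Lemma envR_add E v0 v1 : envR E -> is_value v0 -> is_value v1 -> wf 0 v0 -> wf 0 v1 -> R v0 v1 ->
  envR (env_add v0 v1 E).
Proof.
move=> [Eok ER] H0 H1 W0 W1 H. split.
- move=> a b [[-> ->]|Hab]; last exact: Eok. split => //; exact/closed_wf.
- move=> a b [[-> ->]|Hab] //. exact: ER.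
Qed.

Lemma X_bisim : is_env_bisim X.
Proof.
constructor => /=.
- by move=> E [].
- move=> E t0 t1 [[Eok _] W0 W1 _]. split => //; exact/closed_wf.
- move=> E t0 t1 [HE W0 W1 H] Hnp E0 E1 P0 P1 Hh.
  have Hr : R t0 t1 by case: H => [//|[Hp0 Hp1 _]]; move: Hnp; rewrite Hp0 Hp1.
  have C : Cx E0 E1 by have := hat_Cx (proj2 HE) Hh P0 Cx_hole; rewrite /=.
  case: (hat_wf Hh) => WE0 WE1.
  split => //=; rewrite ?wf_plug ?WE0 ?WE1 //.
  left. exact: R_rst.
-
  move=> E p0 p1 Ht Hp0 Hp1 p0' Hs Hp0'.
  case: (Xtri_T Ht Hp0 Hp1) => a [b [Sa Sb Hab]]. case: Ht => HE W0 W1 _.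
  case: (steps_inv Sa) Hab => [<-|[y Hxy Syz]] Hab.
  + have Pb : is_prog b by move: (steps_prog Sb Hp1); rewrite (R_prog_nonval Hab Hp0) orbF.
    case: (forward Hab W0 Hp0 Pb Hs) => q S Hq.
    have Sq : steps p1 q := steps_trans Sb (steps1_steps S).
    have Pq : is_prog q by move: (steps_prog Sq Hp1); rewrite (R_prog_nonval Hq Hp0') orbF.
    exists q => //. split => //. split => //.
    * exact: step_wf Hs W0.
    * exact: steps_wf Sq W1.
    * by left.
  + rewrite (step_det Hs Hxy). exists p1; first exact: steps_refl. split => //.
    split => //; first by rewrite -(step_det Hs Hxy); exact: step_wf Hs W0.
    right. split => //; first by rewrite -(step_det Hs Hxy).
    exists a, b. split => //.
-
  move=> E p0 p1 Ht Hp0 Hp1 v0 Hs Hv0.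
  case: (Xtri_T Ht Hp0 Hp1) => a [b [Sa Sb Hab]]. case: Ht => HE W0 W1 _.
  have Wv0 : wf 0 v0 := step_wf Hs W0.
  case: (steps_inv Sa) Hab => [<-|[y Hxy Syz]] Hab.
  + have Pb : is_prog b by move: (steps_prog Sb Hp1); rewrite (R_prog_nonval Hab Hp0) orbF.
    case: (forward Hab W0 Hp0 Pb Hs) => q S Hq.
    have Sq : steps p1 q := steps_trans Sb (steps1_steps S).
    have Vq : is_value q := R_val_progval Hq Hv0 (steps_prog Sq Hp1).
    exists q => //. split => //. apply: envR_add => //. exact: steps_wf Sq W1.
  + have Ey := step_det Hs Hxy. subst y.
    have Ez := steps_val Syz Hv0. subst a.
    have Vb : is_value b := R_val_progval Hab Hv0 (steps_prog Sb Hp1).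
    exists b => //. split => //. apply: envR_add => //. exact: steps_wf Sb W1.
-
  move=> E p0 p1 Ht Hp0 Hp1 p1' Hs Hp1'.
  case: (Xtri_T Ht Hp0 Hp1) => a [b [Sa Sb Hab]]. case: Ht => HE W0 W1 _.
  have Wa : wf 0 a := steps_wf Sa W0.
  case: (steps_inv Sb) Hab => [<-|[y Hxy Syz]] Hab.
  + have Pa : is_prog a := R_prog_progval Hab Hp1 (steps_prog Sa Hp0).
    case: (prog_step Wa Pa) => a' Ha'.
    case: (forward Hab Wa Pa Hp1 Ha') => q [y Hy Syq] Hq.
    rewrite -(step_det Hs Hy) in Syq.
    exists a => //. split => //. split => //.
    * exact: step_wf Hs W1.
    * right. split => //. exists a', q. split => //. exact: steps_one.
  + rewrite -(step_det Hs Hxy) in Syz.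
    exists p0; first exact: steps_refl. split => //. split => //.
    * exact: step_wf Hs W1.
    * right. split => //. exists a, b. split => //.
-
  move=> E p0 p1 Ht Hp0 Hp1 v1 Hs Hv1.
  case: (Xtri_T Ht Hp0 Hp1) => a [b [Sa Sb Hab]]. case: Ht => HE W0 W1 _.
  have Wa : wf 0 a := steps_wf Sa W0.
  have Wv1 : wf 0 v1 := step_wf Hs W1.
  case: (steps_inv Sb) Hab => [<-|[y Hxy Syz]] Hab.
  + have Pa : is_prog a := R_prog_progval Hab Hp1 (steps_prog Sa Hp0).
    case: (prog_step Wa Pa) => a' Ha'.
    case: (forward Hab Wa Pa Hp1 Ha') => q [y Hy Syq] Hq.
    rewrite -(step_det Hs Hy) in Syq. have Eq := steps_val Syq Hv1. subst q.
    have Va' : is_value a'.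
      case/orP: (step_prog Ha' Pa) => // Pa'. by rewrite (R_prog_nonval Hq Pa') in Hv1.
    exists a'; first exact: steps_trans Sa (steps_one Ha').
    split => //. apply: envR_add => //. exact: step_wf Ha' Wa.
  + rewrite -(step_det Hs Hxy) in Syz. have Ez := steps_val Syz Hv1. subst b.
    have Va : is_value a.
      case/orP: (steps_prog Sa Hp0) => // Pa. by rewrite (R_prog_nonval Hab Pa) in Hv1.
    exists a => //. split => //. by apply: envR_add.
-
  move=> E [Eok ER] b0 b1 Hb v0 v1 H0 H1 [Ht [C0 C1]].
  case: (Eok _ _ Hb) => _ _ Cb0 Cb1.
  move: Cb0 Cb1 C0 C1; rewrite !closed_wf /= => Wb0 Wb1 Wv0 Wv1.
  split => //; try exact: closed_subst0.
  left. apply: R_subst; first exact: R_lam_inv (ER _ _ Hb). exact: tilde_R Ht.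
Qed.

Lemma ren_tlift r t c : ren r c.+1 (tlift 1 c t) = tlift 1 c (ren r c t).
Proof.
elim: t c => [i|t IH|a IHa b IHb|t IH|t IH] c /=; rewrite ?IH ?IHa ?IHb //.
repeat (case: ifP => /= ?); try (congr Var); try lia.
have -> : i + 1 - c.+1 = i - c by lia. lia.
Qed.

Lemma wf_ren r m s c : (forall i, i \in fv s -> c <= i -> r (i - c) < m) -> wf (c + m) (ren r c s).
Proof.
elim: s c => [i|s IH|a IHa b IHb|s IH|s IH] c /= H.
- case: ifP => /= Hi; first lia. have := H i (mem_head _ _). lia.
- rewrite -addSn. apply: IH => j Hj Hcj.
  have Hj' : j.-1 \in [seq i.-1 | i <- fv s & i != 0].
    apply: map_f. rewrite mem_filter Hj andbT. lia.
  have := H _ Hj' (_ : c <= j.-1). have -> : j - c.+1 = j.-1 - c by lia. apply. lia.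
- rewrite IHa ?IHb // => i Hi; apply: H; by rewrite mem_cat Hi ?orbT.
- rewrite -addSn. apply: IH => j Hj Hcj.
  have Hj' : j.-1 \in [seq i.-1 | i <- fv s & i != 0].
    apply: map_f. rewrite mem_filter Hj andbT. lia.
  have := H _ Hj' (_ : c <= j.-1). have -> : j - c.+1 = j.-1 - c by lia. apply. lia.
- exact: IH.
Qed.

Lemma wf_iter_lam k m x : wf k (iter m Lam x) = wf (k + m) x.
Proof. elim: m k => [|m IH] k /=; first by rewrite addn0. by rewrite IH addSnnS. Qed.

Lemma wf_close xs u : {subset fv u <= xs} -> wf 0 (close xs u).
Proof.
move=> Hs. rewrite /close wf_iter_lam add0n.
have := @wf_ren (fun x => (size xs).-1 - index x xs) (size xs) u 0. rewrite add0n. apply.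
move=> i Hi _. have Hx := Hs _ Hi. rewrite subn0.
have : 0 < size xs by case: xs Hx {Hs}.
lia.
Qed.

Lemma R_iter_lam m a b : R a b -> R (iter m Lam a) (iter m Lam b).
Proof. move=> H. elim: m => //= m IH. exact: R_lam. Qed.

Theorem lemma19 (t : term) :
  open_approx t (Shift (App (Var 0) (tlift 1 0 t))).
Proof.
rewrite /open_approx. set xs := sort leq _.
exists X. split; first exact: X_bisim.
have Hsub : forall u, {subset fv u <= fv t ++ fv (Shift (App (Var 0) (tlift 1 0 t)))} ->
   {subset fv u <= xs}.
  move=> u Hu i Hi. by rewrite /xs mem_sort mem_undup; apply: Hu.
split.
- split; by [].
- apply: wf_close. apply: Hsub => i Hi. by rewrite mem_cat Hi.
- apply: wf_close. apply: Hsub => i Hi. by rewrite mem_cat Hi orbT.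
- left. rewrite /close. apply: R_iter_lam. rewrite /= ren_tlift.
  exact: (R_sk (R_refl _)).
Qed.
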